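(* Let $n\ge2$ and $k\ge1$ be integers. Then $\mathcal{M}(n,k)\ge\binom{n+k-1}{k}$. Moreover, if a $(k,k)$-design $C\subset\mathbb{S}^{n-1}$ has exactly $\binom{n+k-1}{k}$ points, then for all distinct $x,y\in C$ the inner product $\langle x,y\rangle$ is a zero of $P_k^{(n+2)}(t)$.
   Context: For $m\ge 2$, let $P_i^{(m)}(t)$ be the normalized Gegenbauer polynomials: $P_0^{(m)}=1$, $P_1^{(m)}=t$, and $(i+m-2)P_{i+1}^{(m)}(t)=(2i+m-2)tP_i^{(m)}(t)-iP_{i-1}^{(m)}(t)$ for $i\ge1$. For a finite nonempty $C\subset\mathbb{S}^{n-1}$, its moments are $M_i(C)=\sum_{x,y\in C}P_i^{(n)}(\langle x,y\rangle)$. $C$ is a spherical $(k,k)$-design if $M_{2i}(C)=0$ for $i=1,\dots,k$. $\mathcal{M}(n,k)$ is the minimum cardinality of a $(k,k)$-design in $\mathbb{S}^{n-1}$. *)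

(* Defs.v *)
From HB Require Import structures.
From mathcomp Require Import all_boot all_order all_algebra.
From mathcomp Require Import reals.
Set Implicit Arguments. Unset Strict Implicit. Unset Printing Implicit Defensive.
Import Order.TTheory GRing.Theory Num.Theory.
Local Open Scope ring_scope.

Section Defs.
Variable R : realType.

(* gegen_pair m i = (P_i^(m), P_{i+1}^(m)) using
   (i+m-2) P_{i+1} = (2i+m-2) t P_i - i P_{i-1}  for i >= 1. *)
Fixpoint gegen_pair (m i : nat) : {poly R} * {poly R} :=
  match i with
  | 0 => (1, 'X)
  | j.+1 =>
      let pq := gegen_pair m j in
      (pq.2,
       (((j.+1 + m - 2)%N)%:R)^-1 *:
         (((2 * j.+1 + m - 2)%N)%:R *: ('X * pq.2) - (j.+1)%:R *: pq.1))
  end.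

(* normalized Gegenbauer polynomial P_i^(m) *)
Definition gegen (m i : nat) : {poly R} := (gegen_pair m i).1.

Definition dotv (n : nat) (x y : 'rV[R]_n) : R := \sum_(j < n) x 0 j * y 0 j.

Definition on_sphere (n : nat) (x : 'rV[R]_n) : Prop := dotv x x = 1.

Definition sph_code (n : nat) (C : seq 'rV[R]_n) : Prop :=
  [/\ uniq C, (0 < size C)%N & forall x, x \in C -> on_sphere x].

Definition moment (n : nat) (C : seq 'rV[R]_n) (i : nat) : R :=
  \sum_(x <- C) \sum_(y <- C) (gegen n i).[dotv x y].

Definition kk_design (n k : nat) (C : seq 'rV[R]_n) : Prop :=
  sph_code C /\ forall i, (1 <= i <= k)%N -> moment C (2 * i) = 0.

End Defs.

(* Main.v *)
Require Import Defs.
From HB Require Import structures.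
From mathcomp Require Import all_boot all_order all_algebra.
From mathcomp Require Import reals.
From mathcomp Require Import ring zify.
Import Order.TTheory GRing.Theory Num.Theory.
Local Open Scope ring_scope.

Lemma ind2 (Q : nat -> Prop) : Q 0%N -> Q 1%N -> (forall j, Q j -> Q j.+1 -> Q j.+2) -> forall j, Q j.
Proof.
move=> h0 h1 hs j; suff : Q j /\ Q j.+1 by case.
elim: j => [|j [a b]]; first by split.
by split => //; apply: hs.
Qed.

Section Gegen.
Variable R : realType.
Variable u : nat.

Lemma gegS m j : gegen R m j.+2 = ((j.+1 + m - 2)%N%:R)^-1 *:
   (((2 * j.+1 + m - 2)%N%:R) *: ('X * gegen R m j.+1) - (j.+1)%:R *: gegen R m j).
Proof. by []. Qed.

Lemma gegen0 m : gegen R m 0 = 1. Proof. by []. Qed.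
Lemma gegen1 m : gegen R m 1 = 'X. Proof. by []. Qed.

Lemma gegrec m j : (2 <= m)%N -> ((j.+1 + m - 2)%N%:R : R) *: gegen R m j.+2 =
   ((2 * j.+1 + m - 2)%N%:R) *: ('X * gegen R m j.+1) - (j.+1)%:R *: gegen R m j.
Proof.
move=> hm; rewrite gegS scalerA mulfV ?scale1r //.
rewrite pnatr_eq0; lia.
Qed.

Notation P := (gegen R (u + 2)).

Lemma Prec j : ((j.+1 + u)%N%:R : R) *: P j.+2 =
   ((2 * j.+1 + u)%N%:R) *: ('X * P j.+1) - (j.+1)%:R *: P j.
Proof.
have := @gegrec (u + 2) j.
have -> : (j.+1 + (u + 2) - 2 = j.+1 + u)%N by lia.
have -> : (2 * j.+1 + (u + 2) - 2 = 2 * j.+1 + u)%N by lia.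
by apply; lia.
Qed.

Lemma Prec' j : ((2 * j + u)%N%:R : R) *: ('X * P j) =
   (j + u)%N%:R *: P j.+1 + j%:R *: P j.-1.
Proof.
case: j => [|j]; first by rewrite /= scale0r addr0 muln0 add0n mulr1.
have := Prec j; move/(congr1 (fun z => z + j.+1%:R *: P j)); rewrite subrK => <-.
by rewrite addSn.
Qed.

Lemma PrecS j : ((2 * j.+1 + u)%N%:R : R) *: ('X * P j.+1) =
   (j.+1 + u)%N%:R *: P j.+2 + j.+1%:R *: P j.
Proof. exact: (Prec' j.+1). Qed.

Lemma P_coef j i : (P j.+2)`_i = ((j.+1 + u)%N%:R)^-1 *
  (((2 * j.+1 + u)%N%:R) * (if i == 0%N then 0 else (P j.+1)`_i.-1) - (j.+1)%:R * (P j)`_i).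
Proof.
rewrite gegS coefZ coefB !coefZ coefXM.
have -> : (j.+1 + (u + 2) - 2 = j.+1 + u)%N by lia.
by have -> : (2 * j.+1 + (u + 2) - 2 = 2 * j.+1 + u)%N by lia.
Qed.

Lemma P_par j i : odd (i + j) -> (P j)`_i = 0.
Proof.
move: i; elim/ind2: j.
- by move=> i; rewrite addn0 /= coefC; case: i.
- by move=> i; rewrite /= coefX; case: i => [|[|i]].
move=> j IH1 IH2 i hi; rewrite P_coef IH1; last by move: hi; rewrite !addnS /= negbK.
case: i hi => [|i] hi /=; first by rewrite !(mulr0, subr0).
rewrite IH2 ?(mulr0, subr0) //.
by move: hi; rewrite !addSn !addnS /= negbK.
Qed.

Lemma P_deg j i : (j < i)%N -> (P j)`_i = 0.
Proof.
move: i; elim/ind2: j.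
- by move=> i hi; rewrite /= coefC; case: i hi.
- by move=> i; rewrite /= coefX; case: i => [|[|i]].
move=> j IH1 IH2 i hi; rewrite P_coef IH1; last by lia.
case: i hi => [|i] hi /=; first by rewrite !(mulr0, subr0).
by rewrite IH2 ?(mulr0, subr0) //.
Qed.

Lemma P_lead j : 0 < (P j)`_j.
Proof.
elim/ind2: j.
- by rewrite /= coefC ltr01.
- by rewrite /= coefX ltr01.
move=> j IH1 IH2; rewrite P_coef /= (@P_deg j j.+2) // mulr0 subr0.
by rewrite mulr_gt0 ?invr_gt0 ?ltr0n ?addSn // mulr_gt0 // ltr0n; lia.
Qed.

Lemma P_one j : (P j).[1] = 1.
Proof.
elim/ind2: j; first by rewrite hornerC.
- by rewrite hornerX.
move=> j IH1 IH2; rewrite gegS hornerZ hornerD hornerN !hornerZ.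
rewrite -commr_polyX hornerMX IH1 IH2 !mulr1.
have -> : (j.+1 + (u + 2) - 2 = j.+1 + u)%N by lia.
have -> : (2 * j.+1 + (u + 2) - 2 = (j.+1 + u) + j.+1)%N by lia.
by rewrite [X in X - _]natrD addrK mulVf // pnatr_eq0; lia.
Qed.

End Gegen.

Section Func.
Variable R : realType.
Variable u : nat.
Notation P := (gegen R (u + 2)).

Fixpoint Lf (d : nat) (p : {poly R}) : R :=
  if d is d'.+1 then Lf d' (p - (p`_d / (P d)`_d) *: P d) else p`_0.

Lemma Lf_lin d a p q : Lf d (a *: p + q) = a * Lf d p + Lf d q.
Proof.
elim: d p q => [|d IH] p q /=; first by rewrite coefD coefZ.
rewrite -IH; congr (Lf d _); rewrite coefD coefZ.
rewrite -!mul_polyC. ring.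
Qed.

Lemma Lf0 d : Lf d 0 = 0.
Proof. elim: d => [|d IH] /=; first by rewrite coef0. by rewrite coef0 mul0r scale0r subr0. Qed.

Lemma LfZ d a p : Lf d (a *: p) = a * Lf d p.
Proof. by rewrite -[a *: p]addr0 Lf_lin Lf0 addr0. Qed.

Lemma LfD d p q : Lf d (p + q) = Lf d p + Lf d q.
Proof. by rewrite -{1}[p]scale1r Lf_lin mul1r. Qed.

Lemma LfN d p : Lf d (- p) = - Lf d p.
Proof. by rewrite -scaleN1r LfZ mulN1r. Qed.

Lemma LfB d p q : Lf d (p - q) = Lf d p - Lf d q.
Proof. by rewrite LfD LfN. Qed.

Lemma Lf_P d j : (j <= d)%N -> Lf d (P j) = (j == 0%N)%:R.
Proof.
elim: d j => [|d IH] j hj.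
  by case: j hj => // _; rewrite /= coefC.
rewrite /=; case: (ltngtP j d.+1) hj => // [hjd|->] _.
  by rewrite (@P_deg R u j d.+1) // mul0r scale0r subr0 IH.
by rewrite divff ?scale1r ?subrr ?Lf0 //; apply: lt0r_neq0; apply: P_lead.
Qed.

End Func.

Section Kern.
Variable R : realType.
Variable u : nat.
Notation P := (gegen R (u + 2)).

Definition cc (j : nat) : R := ('C(u + j, j))%:R.
Definition hh (j : nat) : R := if j is j'.+1 then cc j + cc j' else 1.
Definition Dfn (j : nat) : R := ('C(u + j + 1, j))%:R.

Lemma cc0 : cc 0 = 1. Proof. by rewrite /cc bin0. Qed.
Lemma cc_gt0 j : 0 < cc j. Proof. by rewrite /cc ltr0n bin_gt0 leq_addl. Qed.

Lemma ccS j : cc j.+1 = cc j * (u + j.+1)%:R / j.+1%:R.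
Proof.
have := mul_bin_diag (u + j.+1) j; rewrite addnS /= => /(congr1 (fun z => z%:R : R)).
rewrite !natrM => e; rewrite /cc addnS.
apply: (mulIf (_ : j.+1%:R != 0 :> R)); first by rewrite pnatr_eq0.
by rewrite divfK ?pnatr_eq0 // [in RHS]mulrC e mulrC.
Qed.

Lemma hS j : hh j.+1 = cc j * (2 * j.+1 + u)%:R / j.+1%:R.
Proof. by rewrite /= ccS; field; rewrite nat1r pnatr_eq0. Qed.

Lemma DS j : Dfn j.+1 = Dfn j * (u + j + 2)%:R / j.+1%:R.
Proof.
have := mul_bin_diag (u + j.+1 + 1) j.
have -> : ((u + j.+1 + 1).-1 = u + j + 1)%N by lia.
move=> /(congr1 (fun z => z%:R : R)); rewrite !natrM => e; rewrite /Dfn.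
apply: (mulIf (_ : j.+1%:R != 0 :> R)); first by rewrite pnatr_eq0.
rewrite divfK ?pnatr_eq0 //.
have -> : (u + j + 2 = u + j.+1 + 1)%N by lia.
by rewrite [RHS]mulrC e mulrC.
Qed.

Lemma G i : hh i.+1 *: ('X * P i.+1) = cc i *: P i + cc i.+1 *: P i.+2.
Proof.
have hz : ((2 * i.+1 + u)%N%:R : R) != 0 by rewrite pnatr_eq0; lia.
apply: (scalerI hz); rewrite hS scalerA mulrC -scalerA PrecS.
move: (P i) (P i.+2) => p q.
apply/polyP => l; rewrite !(coefD, coefZ) ccS.
by field; rewrite nat1r pnatr_eq0.
Qed.

Fixpoint Kp (j : nat) : {poly R} :=
  match j with
  | 0 => 1
  | S 0 => hh 1 *: P 1
  | S (S j') => Kp j' + hh j'.+2 *: P j'.+2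
  end.

Lemma KpSS j : Kp j.+2 = Kp j + hh j.+2 *: P j.+2. Proof. by []. Qed.

Lemma XK j : 'X * Kp j.+1 = Kp j + cc j.+1 *: P j.+2.
Proof.
elim/ind2: j.
- by rewrite /= -scalerAr G cc0 scale1r.
- rewrite /= mulrDr mulr1 -scalerAr G /= cc0.
  apply/polyP => l; rewrite !(coefD, coefZ, coefX) /=; ring.
move=> j IH1 IH2; rewrite [Kp j.+3]/= mulrDr IH1 -scalerAr G.
rewrite [Kp j.+2]/= /=; apply/polyP => l; rewrite !(coefD, coefZ) /=; ring.
Qed.

Lemma K_par j i : odd (i + j) -> (Kp j)`_i = 0.
Proof.
move: i; elim/ind2: j.
- by move=> i; rewrite addn0 /= coefC; case: i.
- by move=> i hi; rewrite /= coefZ (P_par _ _ _ _ hi) mulr0.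
move=> j IH _ i hi; rewrite /= coefD coefZ IH ?(P_par _ _ _ _ hi) ?mulr0 ?addr0 //.
by move: hi; rewrite !addnS /= negbK.
Qed.

Lemma K_deg j i : (j < i)%N -> (Kp j)`_i = 0.
Proof.
move: i; elim/ind2: j.
- by move=> i; rewrite /= coefC; case: i.
- by move=> i hi; rewrite /= coefZ (P_deg _ _ _ _ hi) mulr0.
move=> j IH _ i hi; rewrite /= coefD coefZ IH ?(P_deg _ _ _ _ hi) ?mulr0 ?addr0 //; lia.
Qed.

Lemma K_one j : (Kp j).[1] = Dfn j.
Proof.
elim/ind2: j.
- by rewrite /= hornerC /Dfn bin0.
- rewrite /= hornerZ P_one mulr1 cc0 /Dfn /cc !bin1.
  by rewrite [in RHS]natrD.
move=> j IH _; rewrite /= hornerD hornerZ P_one mulr1 IH /Dfn /cc.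
rewrite -!natrD; congr (_%:R).
have e1 : 'C(u + j.+2 + 1, j.+2) = ('C(u+j.+2, j.+2) + 'C(u+j.+2, j.+1))%N by rewrite addn1 binS.
have e2 : 'C(u+j.+2, j.+1) = ('C(u+j.+1, j.+1) + 'C(u+j.+1, j))%N by rewrite addnS binS.
have -> : (u + j + 1 = u + j.+1)%N by lia.
rewrite e1 e2; lia.
Qed.


End Kern.

Section KQ.
Variable R : realType.
Variable u : nat.
Notation P := (gegen R (u + 2)).
Notation Q := (gegen R (u + 2 + 2)).
Notation Kp := (Kp R u).
Notation cc := (cc R u).
Notation hh := (hh R u).
Notation Dfn := (Dfn R u).

Lemma KR j : cc j.+1 *: Kp j.+2 = hh j.+2 *: ('X * Kp j.+1) - cc j.+2 *: Kp j.
Proof.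
rewrite XK [Kp j.+2]/= [hh j.+2]/=.
move: (Kp j) (P j.+2) => a b; apply/polyP => l; rewrite !(coefD, coefB, coefZ, coefN); ring.
Qed.

Lemma K_Q j : Kp j = Dfn j *: Q j.
Proof.
elim/ind2: j.
- by rewrite /= /Dfn bin0 scale1r.
- have := K_one R u 1; rewrite /= hornerZ P_one mulr1 => ->; by [].
move=> j IH1 IH2.
have E1 := KR j; rewrite IH1 IH2 in E1.
have h2 : (2 <= u + 2 + 2)%N by lia.
have E2 := @gegrec R (u + 2 + 2) j h2.
have e : (j.+1 + (u + 2 + 2) - 2 = j.+1 + u + 2)%N by lia.
have e' : (2 * j.+1 + (u + 2 + 2) - 2 = 2 * j.+1 + u + 2)%N by lia.
rewrite e e' in E2.
have hz : (cc j.+1 * (j.+1 + u + 2)%N%:R) != 0.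
  by rewrite mulf_neq0 ?pnatr_eq0 ?addnS // -lt0n bin_gt0; lia.
apply: (scalerI hz).
have -> : (cc j.+1 * (j.+1 + u + 2)%N%:R) *: (Dfn j.+2 *: Q j.+2) =
   (cc j.+1 * Dfn j.+2) *: ((j.+1 + u + 2)%N%:R *: Q j.+2) by rewrite !scalerA; congr (_ *: _); ring.
rewrite E2 [cc j.+1 * _]mulrC -[in LHS]scalerA E1 -scalerAr.
rewrite (hS R u j.+1) (ccS R u j.+1) (DS R u j.+1) (DS R u j).
move: (Q j) ('X * Q j.+1) => a b; apply/polyP => l; rewrite !(coefD, coefB, coefZ, coefN).
have := cc_gt0 R u j.+1; move: (cc j.+1) => c hc.
by field; rewrite ?nat1r -?natrD ?pnatr_eq0.
Qed.

End KQ.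

Section Favard.
Variable R : realType.
Variable u k : nat.
Hypothesis hk : (1 <= k)%N.
Notation P := (gegen R (u + 2)).
Notation Kp := (Kp R u).
Notation cc := (cc R u).
Notation hh := (hh R u).
Notation Dfn := (Dfn R u).
Notation L := (Lf R u (2 * k)).

Lemma LPX a b : ((2 * b + u)%N%:R : R) * L (P a * ('X * P b)) =
  (b + u)%N%:R * L (P a * P b.+1) + b%:R * L (P a * P b.-1).
Proof.
have := congr1 (fun z => L (P a * z)) (Prec' R u b).
by rewrite /= mulrDr -!scalerAr LfD !LfZ.
Qed.

Lemma LPrec a b : ((a.+1 + u)%N%:R : R) * L (P a.+2 * P b) =
  (2 * a.+1 + u)%N%:R * L (P a.+1 * ('X * P b)) - a.+1%:R * L (P a * P b).
Proof.
have := congr1 (fun z => L (z * P b)) (Prec R u a).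
rewrite /= mulrBl -!scalerAl LfB !LfZ => ->.
have -> : 'X * P a.+1 * P b = P a.+1 * ('X * P b) by rewrite -mulrA mulrCA.
by [].
Qed.

Lemma nzn (m : nat) : (0 < m)%N -> (m%:R : R) != 0.
Proof. by rewrite pnatr_eq0 -lt0n. Qed.

Lemma orth i j : (i < j)%N -> (i + j <= 2 * k)%N -> L (P i * P j) = 0.
Proof.
move: j; suff : (forall j, (i < j)%N -> (i + j <= 2 * k)%N -> L (P i * P j) = 0) /\
                (forall j, (i.+1 < j)%N -> (i.+1 + j <= 2 * k)%N -> L (P i.+1 * P j) = 0) by case.
elim: i => [|i [IH1 IH2]].
  split=> j hj hb.
    by rewrite mul1r Lf_P; [case: j hj hb|lia].
  have hz : ((2 * j + u)%N%:R : R) != 0 by apply: nzn; lia.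
  apply: (mulfI hz); rewrite mulr0 (_ : P 1 * P j = P 0 * ('X * P j)); last by rewrite mul1r.
  rewrite LPX !mul1r !Lf_P; try lia.
  by clear hz; case: j hj hb => [|[|j]] //= _ _; rewrite !mulr0 addr0.
split=> // j hj hb.
have hz : ((i.+1 + u)%N%:R : R) != 0 by apply: nzn; lia.
apply: (mulfI hz); rewrite mulr0 LPrec IH1; try lia.
rewrite mulr0 subr0.
have hz' : ((2 * j + u)%N%:R : R) != 0 by apply: nzn; lia.
apply/eqP; rewrite mulf_eq0; apply/orP; right; apply/eqP.
apply: (mulfI hz'); rewrite mulr0 LPX !IH2; try lia.
by rewrite !mulr0 addr0.
Qed.


Lemma norm j : (j <= k)%N -> hh j * L (P j * P j) = 1.
Proof.
have norm1 : hh 1 * L (P 1 * P 1) = 1.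
  have := LPX 0 1; rewrite (@orth 0 2) //; last by lia.
  rewrite (_ : P 0 * P 0 = P 0); last by rewrite mul1r.
  rewrite Lf_P // mulr0 add0r mulr1 (_ : P 0 * ('X * P 1) = P 1 * P 1); last by rewrite mul1r.
  move=> e.
  have -> : hh 1 = (2 * 1 + u)%N%:R.
    by rewrite /= cc0 /cc bin1 natr1; congr (_%:R); lia.
  exact: e.
move: j; suff : forall j, ((j <= k)%N -> hh j * L (P j * P j) = 1) /\ ((j.+1 <= k)%N -> hh j.+1 * L (P j.+1 * P j.+1) = 1) by move=> h j; case: (h j).
elim=> [|j [_ IH]].
  split=> // _; by rewrite /= mul1r mul1r Lf_P.
split=> // hj.
have e1 := IH (ltnW hj).
have E := LPrec j j.+2; rewrite (@orth j j.+2) ?mulr0 ?subr0 in E; last by lia.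
have E' := LPX j.+1 j.+2; rewrite (@orth j.+1 j.+3) ?mulr0 ?add0r in E'; last by lia.
move: E E'.
move: (L (P j.+2 * P j.+2)) (L (P j.+1 * ('X * P j.+2))) (L (P j.+1 * P j.+1)) e1 => a b c e1 E E'.
rewrite (hS R u j.+1); rewrite (hS R u j) in e1.
have hc := cc_gt0 R u j; rewrite (ccS R u j).
move: (cc j) hc e1 => cj hc e1.
have hcj : cj != 0 by rewrite lt0r_neq0.
have ea : a = (2 * j.+1 + u)%:R * b / (j.+1 + u)%:R.
  by rewrite -E mulrC mulKf // pnatr_eq0 addSn.
have eb : b = j.+2%:R * c / (2 * j.+2 + u)%:R.
  by rewrite -E' mulrC mulKf // pnatr_eq0 mul2n doubleS addSn.
have ec := esym (mulr1_eq e1).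
rewrite ea eb ec; field.
rewrite hcj ?andbT ?andTb ?nat1r -?natrD -?natrM ?nat1r -?natrD -?natrM ?pnatr_eq0; lia.
all: lia.
Qed.


Lemma LKP j i : (j < i)%N -> (i + j <= 2 * k)%N -> L (Kp j * P i) = 0.
Proof.
move: i; elim/ind2: j.
- move=> i hi hb; rewrite /= (_ : 1 * P i = P 0 * P i) //.
  by rewrite (@orth 0 i) //; lia.
- move=> i hi hb; rewrite /= -scalerAl LfZ (@orth 1 i) ?mulr0 //; lia.
move=> j IH _ i hi hb; rewrite [Kp j.+2]/= mulrDl -scalerAl LfD LfZ IH; try lia.
by rewrite (@orth j.+2 i) ?mulr0 ?addr0 //; lia.
Qed.

Lemma LKK j : (j <= k)%N -> L (Kp j * Kp j) = (Kp j).[1].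
Proof.
elim/ind2: j.
- by move=> _; rewrite /= mul1r hornerC (_ : 1 = P 0) // Lf_P.
- move=> hj; rewrite [Kp 1]/= -scalerAl -scalerAr !LfZ hornerZ P_one mulr1 mulrA.
  by rewrite -mulrA; have := @norm 1 hj; rewrite /= => ->; rewrite mulr1.
move=> j IH _ hj; rewrite KpSS.
have n2 := @norm j.+2 hj.
have o : L (Kp j * P j.+2) = 0 by apply: LKP; lia.
have one := P_one R u j.+2.
move: (P j.+2) n2 o one => p n2 o one.
rewrite mulrDl !mulrDr -!scalerAl -!scalerAr !LfD !LfZ.
rewrite IH; last by lia.
by rewrite (mulrC p) o n2 hornerD hornerZ one; ring.
Qed.

End Favard.

Section Design.
Variable R : realType.
Variable u k : nat.
Hypothesis hk : (1 <= k)%N.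
Variable C : seq 'rV[R]_(u + 2).
Notation P := (gegen R (u + 2)).
Notation L := (Lf R u (2 * k)).

Definition S (p : {poly R}) : R := \sum_(x <- C) \sum_(y <- C) p.[dotv x y].

Lemma S_lin a p q : S (a *: p + q) = a * S p + S q.
Proof.
rewrite /S mulr_sumr -big_split; apply: eq_bigr => x _.
rewrite mulr_sumr -big_split; apply: eq_bigr => y _.
by rewrite hornerD hornerZ.
Qed.

Lemma sum_const_seq (T : Type) (s : seq T) (c : R) : \sum_(x <- s) c = c * (size s)%:R.
Proof.
elim: s => [|x s IH]; first by rewrite big_nil mulr0.
by rewrite big_cons IH /= -natr1 mulrDr mulr1 addrC.
Qed.

Lemma S_const c : S c%:P = c * (size C)%:R ^+ 2.
Proof.
rewrite /S (eq_bigr (fun _ => c * (size C)%:R)); last first.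
  by move=> x _; rewrite (eq_bigr (fun _ => c)) ?sum_const_seq // => y _; rewrite hornerC.
by rewrite sum_const_seq expr2 mulrA.
Qed.

Hypothesis hd : forall i, (1 <= i <= k)%N -> S (P (2 * i)) = 0.

Lemma S_L d (p : {poly R}) : (d <= 2 * k)%N -> (forall i, (d < i)%N -> p`_i = 0) ->
  (forall i, odd i -> p`_i = 0) -> S p = (size C)%:R ^+ 2 * L p.
Proof.
elim: d p => [|d IH] p hdk hdeg hodd.
  have -> : p = (p`_0)%:P.
    apply/polyP => i; rewrite coefC; case: i => [|i] //=; exact: hdeg.
  rewrite S_const -alg_polyC (_ : (1 : {poly R}) = P 0) // LfZ Lf_P //.
  by rewrite mulr1 mulrC.
case: (boolP (odd d.+1)) => hod.
  apply: IH => //; first by lia.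
  move=> i hi; case: (ltngtP i d.+1) => [||->]; [lia|by move=> /hdeg|exact: hodd].
have e2 : (2 * (d.+1)./2 = d.+1)%N.
  by rewrite mul2n -[RHS]odd_double_half (negbTE hod).
have hS0 : S (P d.+1) = 0.
  rewrite -e2; apply: hd; apply/andP; split; lia.
have hL0 : L (P d.+1) = 0 by rewrite Lf_P //; lia.
have hlead := P_lead R u d.+1.
have hdeg' : forall i, (d.+1 < i)%N -> (P d.+1)`_i = 0 by move=> i; apply: P_deg.
have hpar : forall i, odd i -> (P d.+1)`_i = 0.
  by move=> i hi; apply: P_par; rewrite oddD hi (negbTE hod).
move: (P d.+1) hS0 hL0 hlead hdeg' hpar => q hS0 hL0 hlead hdeg' hpar.
set c := p`_d.+1 / q`_d.+1.
have -> : p = c *: q + (p - c *: q) by rewrite addrC subrK.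
rewrite S_lin Lf_lin hS0 hL0 !mulr0 !add0r.
apply: IH; first by lia.
  move=> i hi; rewrite coefB coefZ.
  case: (ltngtP i d.+1) => [||->]; [lia|move=> hi'; by rewrite hdeg // hdeg' // mulr0 subr0|].
  by rewrite /c divfK ?subrr // lt0r_neq0.
by move=> i hi; rewrite coefB coefZ hodd // hpar // mulr0 subr0.
Qed.

End Design.

Lemma sum_ge2 (R : realType) (T : eqType) (r : seq T) (F : T -> R) x y :
  uniq r -> x \in r -> y \in r -> x != y -> (forall z, 0 <= F z) ->
  F x + F y <= \sum_(z <- r) F z.
Proof.
move=> ur xr yr nxy F0; rewrite (bigD1_seq x) //= lerD2l.
rewrite big_mkcond (bigD1_seq y) //= eq_sym nxy /= lerDl.
by apply: sumr_ge0 => z _; case: ifP.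
Qed.

Lemma sum_ge1 (R : realType) (T : eqType) (r : seq T) (F : T -> R) x :
  uniq r -> x \in r -> (forall z, 0 <= F z) -> F x <= \sum_(z <- r) F z.
Proof.
move=> ur xr F0; rewrite (bigD1_seq x) //= lerDl.
by apply: sumr_ge0 => z _.
Qed.

Section Main.
Variable R : realType.
Variable u k : nat.
Hypothesis hk : (1 <= k)%N.
Variable C : seq 'rV[R]_(u + 2).
Hypothesis hC : kk_design k C.
Notation P := (gegen R (u + 2)).
Notation K := (Kp R u k).
Notation N := ((size C)%:R : R).
Notation Dk := (Dfn R u k).
Definition f (x y : 'rV[R]_(u + 2)) : R := (K.[dotv x y]) ^+ 2.

Lemma T_eq : \sum_(x <- C) \sum_(y <- C) f x y = N ^+ 2 * Dk.
Proof.
have hd : forall i, (1 <= i <= k)%N -> S R u C (P (2 * i)) = 0.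
  by case: hC => _ h i hi; apply: h.
have -> : \sum_(x <- C) \sum_(y <- C) f x y = S R u C (K * K).
  by rewrite /S; apply: eq_bigr => x _; apply: eq_bigr => y _; rewrite /f hornerM expr2.
rewrite (@S_L R u k hk C hd (2 * k) (K * K) (leqnn _)).
- by rewrite (@LKK R u k hk k (leqnn _)) K_one.
- move=> i hi; rewrite coefM; apply: big1 => j _.
  case: (leqP j k) => hj; last by rewrite K_deg // mul0r.
  by rewrite (@K_deg R u k (i - j)) ?mulr0 //; lia.
move=> i hi; rewrite coefM; apply: big1 => j _.
case: (boolP (odd (j + k))) => hj; first by rewrite K_par // mul0r.
rewrite (@K_par R u k (i - j)) ?mulr0 //.
have hji : (j <= i)%N by case: j hj => j /= hj; rewrite -ltnS.
move: hj hi; rewrite !oddD oddB // => hj hi.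
by move: hj; rewrite hi; case: (odd j); case: (odd k).
Qed.

Lemma fxx x : x \in C -> f x x = Dk ^+ 2.
Proof.
by case: hC => [[_ _ hs] _] xC; rewrite /f (hs x xC) K_one.
Qed.

Lemma sum_diag : \sum_(x <- C) f x x = N * Dk ^+ 2.
Proof.
rewrite (eq_big_seq (fun _ => Dk ^+ 2)); first by rewrite sum_const_seq mulrC.
by move=> x; apply: fxx.
Qed.

Lemma Dk_gt0 : 0 < Dk.
Proof. by rewrite /Dfn ltr0n bin_gt0; lia. Qed.

Lemma bound : Dk <= N.
Proof.
case: hC => [[uC szC _] _].
have hN : 0 < N by rewrite ltr0n.
have h : N * Dk ^+ 2 <= N ^+ 2 * Dk.
  rewrite -sum_diag -T_eq big_seq [X in _ <= X]big_seq; apply: ler_sum => x xC.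
  by apply: (@sum_ge1 _ _ C (f x) x) => // z; apply: sqr_ge0.
have hND : 0 < N * Dk by rewrite mulr_gt0 // Dk_gt0.
rewrite -(ler_pM2l hND).
have -> : N * Dk * Dk = N * Dk ^+ 2 by ring.
by have -> : N * Dk * N = N ^+ 2 * Dk by ring.
Qed.

Lemma tight : N = Dk -> forall x y, x \in C -> y \in C -> x != y -> K.[dotv x y] = 0.
Proof.
case: hC => [[uC szC _] _] eND x y xC yC nxy.
set g := fun x => \sum_(y <- C) f x y - f x x.
have g0 : forall x, x \in C -> 0 <= g x.
  by move=> z zC; rewrite /g subr_ge0; apply: (@sum_ge1 _ _ C (f z) z) => // w; apply: sqr_ge0.
have sg : \sum_(z <- C) g z = 0.
  by rewrite /g big_split /= sumrN T_eq sum_diag eND; ring.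
have gx : g x = 0.
  move: sg; rewrite big_seq => /eqP; rewrite psumr_eq0; last by move=> z zC; apply: g0.
  by move=> /allP /(_ x xC); rewrite xC => /eqP.
have fxy : f x y <= g x.
  rewrite /g lerBrDl; apply: (@sum_ge2 _ _ C (f x)) => // z; apply: sqr_ge0.
apply/eqP; rewrite -sqrf_eq0 eq_le sqr_ge0 andbT -gx; exact: fxy.
Qed.

End Main.

Theorem mainTheorem3 (R : realType) (n k : nat) :
  (2 <= n)%N -> (1 <= k)%N ->
  (forall C : seq 'rV[R]_n, kk_design k C -> ('C(n + k - 1, k) <= size C)%N) /\
  (forall C : seq 'rV[R]_n, kk_design k C -> size C = 'C(n + k - 1, k) ->
     forall x y, x \in C -> y \in C -> x != y ->
       root (gegen R (n + 2) k) (dotv x y)).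
Proof.
move=> hn hk.
have [u ->] : exists u, n = (u + 2)%N by exists (n - 2)%N; rewrite subnK.
have -> : (u + 2 + k - 1 = u + k + 1)%N by lia.
split.
  by move=> C hC; have := @bound R u k hk C hC; rewrite /Dfn ler_nat.
move=> C hC hs x y xC yC nxy.
have eND : ((size C)%:R : R) = Dfn R u k by rewrite hs.
have hK := @tight R u k hk C hC eND x y xC yC nxy.
rewrite K_Q hornerZ in hK.
move/eqP: hK; rewrite mulf_eq0 => /orP [|/eqP //].
have hpos : (0 < 'C(u + k + 1, k))%N by rewrite bin_gt0; lia.
by rewrite /Dfn pnatr_eq0 => /eqP e; rewrite e in hpos.
Qed.
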